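(* Let $G$, $\rho$, $H$, $\{U_i\}_{i\in I}$, $\sigma$, $C$ be as in the context, and let $I_k\subseteq I$ be an orbit of $\sigma$, with a fixed element $0\in I_k$. Suppose we are given a tight compatible encoding scheme for $I_k$ on $C$, i.e. open subsets $\{D^k_i\}_{i\in I_k}$ of $C$ which are pairwise disjoint and cover $C$ up to a set of $\mu_C$-measure zero, such that $h\cdot D^k_i = D^k_{\sigma(i,h^{-1})}$ for all $h\in H$, $i\in I_k$, and set $E^k_i:=D^k_i$ for all $i\in I_k$. For $i\in I_k$ choose $c_i\in H$ with $c_i\cdot E^k_0=E^k_i$. For $x\in C$ lying in $D^k_j$ write $U(x):=U_j$ (defined for $\mu_C$-almost every $x$). For $i\in I_k$ define the channel $$\mathcal T^k_i(\tau):=\frac{1}{\mu_C(E^k_i)}\int_{G\times C} dg\,dx\;\mathbb 1_{E^k_i}(x)\,\big[\rho(g)^\dagger U(g\cdot x)\rho(g)\,U_i^\dagger\big](\tau)$$ on density matrices $\tau$ on $V$ (this is the effective channel, in Alice's frame, of the tight teleportation procedure when Alice obtains measurement result $i$ and sends a uniformly random reading $x\in E^k_i$, Bob receives $g\cdot x$ and applies $U(g\cdot x)$, with $g$ Haar-distributed). Then $$\mathcal T^k_i=\frac{|I_k|}{\mu_C(E^k_0)}\,[\rho(c_i)]\circ\left(\int_G dg\;p(g)\,\big[\rho(g)^\dagger U_0\rho(g)U_0^\dagger\big]\right)\circ[\rho(c_i)^\dagger],$$ where $p(g):=\int_{C}dx\,\mathbb 1_{E^k_0}(x)\,\mathbb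 1_{D^k_0}(g\cdot x)=\mu_C\big(E^k_0\cap g^{-1}\cdot D^k_0\big)$.
   Context: $G$ is a compact Lie group with normalised Haar measure $dg$, and $\rho:G\to U(V)$ is a unitary representation on a Hilbert space $V\cong\mathbb C^d$. For an operator $M$ on $V$, $[M]$ denotes the map $\tau\mapsto M\tau M^\dagger$, and $\circ$ is composition of maps. A unitary error basis (UEB) is a family $\{U_i\}_{i\in I}$, $|I|=d^2$, of unitaries on $V$ with $\frac1d\mathrm{Tr}(U_i^\dagger U_j)=\delta_{ij}$. $H\subseteq G$ is a finite subgroup and $\{U_i\}_{i\in I}$ is $H$-equivariant: there is a right action $\sigma:I\times H\to I$ and phases $\alpha(i,h)\in U(1)$ with $\rho(h)^\dagger U_i\rho(h)=\alpha(i,h)U_{\sigma(i,h)}$ for all $h\in H$, $i\in I$. $C$ is a smooth manifold with a normalised measure $\mu_C$ (written $dx$) carrying a smooth, measure-preserving left action $G\times C\to C$, $(g,x)\mapsto g\cdot x$. $\mathbb 1_S$ denotes the indicator function of a set $S$. *)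

(* Defs.v *)
From HB Require Import structures.
From mathcomp Require Import all_boot all_order all_algebra.
From mathcomp Require Import all_classical all_reals.
From mathcomp Require Import ereal measure numfun lebesgue_measure lebesgue_integral probability.
From mathcomp Require Import complex.

Set Implicit Arguments.
Unset Strict Implicit.
Unset Printing Implicit Defensive.

Import Order.TTheory GRing.Theory Num.Theory.
Local Open Scope classical_set_scope.
Local Open Scope ring_scope.

Definition cintegral d (T : measurableType d) (R : realType)
  (mu : {measure set T -> \bar R}) (f : T -> R[i]) : R[i] :=
  Complex (Rintegral mu setT (fun t => complex.Re (f t)))
          (Rintegral mu setT (fun t => complex.Im (f t))).

Definition mxintegral d (T : measurableType d) (R : realType)
  (mu : {measure set T -> \bar R}) m n (F : T -> 'M[R[i]]_(m, n)) :
  'M[R[i]]_(m, n) :=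
  \matrix_(a < m, b < n) cintegral mu (fun t => F t a b).

Definition mxadj (R : rcfType) m n (M : 'M[R[i]]_(m, n)) : 'M[R[i]]_(n, m) :=
  (map_mx (@conjc R) M)^T.

(* The superoperator [M] : tau |-> M tau M^dagger. *)
Definition conjmap (R : rcfType) n (M : 'M[R[i]]_n) (tau : 'M[R[i]]_n) :
  'M[R[i]]_n := M *m tau *m mxadj M.

Definition complex_of_real (R : rcfType) (r : R) : R[i] := Complex r 0.

(* U(x) := U_j for x in D_j (j in I_k).  Since the D_j are pairwise disjoint
   this is the sum of 1_{D_j}(x) U_j; it is 0 off the union of the D_j,
   a mu_C-null set, where the paper leaves U(x) undefined. *)
Definition Ureading (R : realType) (C : Type) (I : finType) (n : nat) (Ik : {set I})
  (D : I -> set C) (U : I -> 'M[R[i]]_n) (x : C) : 'M[R[i]]_n :=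
  \sum_(j in Ik) complex_of_real (\1_(D j) x) *: U j.

(* Main.v *)
Require Import Defs.
From HB Require Import structures.
From mathcomp Require Import all_boot all_order all_algebra.
From mathcomp Require Import all_classical all_reals.
From mathcomp Require Import ereal measure numfun lebesgue_measure lebesgue_integral probability.
From mathcomp Require Import complex.
From mathcomp Require Import measurable_realfun.

Import Order.TTheory GRing.Theory Num.Theory.
Local Open Scope classical_set_scope.
Local Open Scope ring_scope.



Definition rgood {R : realType} {d : measure_display} {T : measurableType d} (f : T -> R) :=
  measurable_fun setT f /\ exists M, forall x, `|f x| <= M.

Section Good.
Context {R : realType} {d : measure_display} {T : measurableType d}.
Implicit Types f g : T -> R.

Lemma rgood_ext {f g} : rgood f -> f =1 g -> rgood g.
Proof. by move=> h /funext <-. Qed.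

Lemma rgood_cst (r : R) : rgood (fun _ : T => r).
Proof. by split; [exact: measurable_cst | exists `|r|]. Qed.

Lemma rgoodD {f g} : rgood f -> rgood g -> rgood (fun x => f x + g x).
Proof.
move=> [mf [M hM]] [mg [N hN]]; split; first exact: measurable_funD.
exists (M + N) => x; apply: le_trans (ler_normD _ _) _; exact: lerD.
Qed.

Lemma rgoodN {f} : rgood f -> rgood (fun x => - f x).
Proof.
move=> [mf [M hM]]; split; first exact: measurableT_comp.
by exists M => x; rewrite normrN.
Qed.

Lemma rgoodM {f g} : rgood f -> rgood g -> rgood (fun x => f x * g x).
Proof.
move=> [mf [M hM]] [mg [N hN]]; split; first exact: measurable_funM.
exists (M * N) => x; rewrite normrM; apply: ler_pM => //.
Qed.

Lemma rgood_comp {d'} {T' : measurableType d'} {phi : T' -> T} {f} :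
  measurable_fun setT phi -> rgood f -> rgood (f \o phi).
Proof.
move=> mphi [mf [M hM]]; split; first exact: measurableT_comp.
by exists M => x; apply: hM.
Qed.

Lemma rgood_indic A : measurable A -> rgood (\1_A : T -> R).
Proof.
move=> mA; split; first exact: measurable_indic.
exists 1 => x; rewrite /indic; case: (x \in A); by rewrite ?normr1 ?normr0.
Qed.

Lemma rgood_int (mu : {measure set T -> \bar R}) f : (mu setT < +oo)%E ->
  rgood f -> mu.-integrable setT (EFin \o f).
Proof.
move=> mufin [mf [M hM]]; apply: measurable_bounded_integrable => //.
exists M; split; first by rewrite num_real.
by move=> y hy x _; apply: le_trans (hM x) (ltW hy).
Qed.

End Good.

Definition cgood {R : realType} {d : measure_display} {T : measurableType d} (f : T -> R[i]) :=
  rgood (fun x => complex.Re (f x)) /\ rgood (fun x => complex.Im (f x)).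

Ltac rext H := let h := fresh in have h := H; apply: (rgood_ext h).

Section CGood.
Context {R : realType} {d : measure_display} {T : measurableType d}.
Implicit Types f g : T -> R[i].

Lemma cgood_ext {f g} : cgood f -> f =1 g -> cgood g.
Proof. by move=> h /funext <-. Qed.
Ltac cext H := let h := fresh in have h := H; apply: (cgood_ext h).

Lemma cgood_cst (r : R[i]) : cgood (fun _ : T => r).
Proof. by split; apply: rgood_cst. Qed.

Lemma cgoodD {f g} : cgood f -> cgood g -> cgood (fun x => f x + g x).
Proof.
move=> [f1 f2] [g1 g2]; split.
- by rext (rgoodD f1 g1) => x; case: (f x) => ? ?; case: (g x).
- by rext (rgoodD f2 g2) => x; case: (f x) => ? ?; case: (g x).
Qed.

Lemma cgoodM {f g} : cgood f -> cgood g -> cgood (fun x => f x * g x).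
Proof.
move=> [f1 f2] [g1 g2]; split.
- rext (rgoodD (rgoodM f1 g1) (rgoodN (rgoodM f2 g2))) => x.
  by case: (f x) => ? ?; case: (g x).
- rext (rgoodD (rgoodM f1 g2) (rgoodM f2 g1)) => x.
  by case: (f x) => ? ?; case: (g x).
Qed.

Lemma cgoodC {f} : cgood f -> cgood (fun x => (f x)^*).
Proof.
move=> [f1 f2]; split.
- by rext f1 => x; case: (f x).
- by rext (rgoodN f2) => x; case: (f x).
Qed.

Lemma cgood_real (r : T -> R) : rgood r -> cgood (fun x => complex_of_real (r x)).
Proof.
move=> hr; split => //=; exact: rgood_cst.
Qed.

Lemma cgood_comp {d'} {T' : measurableType d'} {phi : T' -> T} {f} :
  measurable_fun setT phi -> cgood f -> cgood (f \o phi).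
Proof. by move=> mphi [f1 f2]; split; apply: rgood_comp f1 ||apply: rgood_comp f2. Qed.

Lemma cgood_sum (J : Type) (s : seq J) (P : pred J) (F : J -> T -> R[i]) :
  (forall j, P j -> cgood (F j)) -> cgood (fun x => \sum_(j <- s | P j) F j x).
Proof.
move=> hF; elim: s => [|a s IH].
  by cext (cgood_cst 0) => x; rewrite big_nil.
case hP: (P a).
  by cext (cgoodD (hF a hP) IH) => x; rewrite big_cons hP.
by cext IH => x; rewrite big_cons hP.
Qed.

Context (mu : {measure set T -> \bar R}) (mufin : (mu setT < +oo)%E).

Lemma cintD f g : cgood f -> cgood g ->
  cintegral mu (fun x => f x + g x) = cintegral mu f + cintegral mu g.
Proof.
move=> [f1 f2] [g1 g2]; rewrite /cintegral.
have -> : (fun t => complex.Re (f t + g t)) =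
   (fun t => complex.Re (f t) + complex.Re (g t)).
  by apply: funext => x; case: (f x) => ? ?; case: (g x).
have -> : (fun t => complex.Im (f t + g t)) =
   (fun t => complex.Im (f t) + complex.Im (g t)).
  by apply: funext => x; case: (f x) => ? ?; case: (g x).
by rewrite !RintegralD //; apply: rgood_int.
Qed.

Lemma cint0 : cintegral mu (fun _ => 0) = 0.
Proof.
rewrite /cintegral /= Rintegral_cst // mul0r //.
Qed.

Lemma cintZ (k : R[i]) f : cgood f ->
  cintegral mu (fun x => k * f x) = k * cintegral mu f.
Proof.
move=> [f1 f2]; rewrite /cintegral; case: k => a b.
have -> : (fun t => complex.Re ((Complex a b) * f t)) =
   (fun t => a * complex.Re (f t) + (- b) * complex.Im (f t)).
  by apply: funext => x; case: (f x) => ? ? /=; rewrite mulNr.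
have -> : (fun t => complex.Im ((Complex a b) * f t)) =
   (fun t => a * complex.Im (f t) + b * complex.Re (f t)).
  by apply: funext => x; case: (f x) => ? ? /=; rewrite addrC.
rewrite !RintegralD //; try (apply: rgood_int => //; apply: rgoodM => //; apply: rgood_cst).
rewrite !RintegralZl //; try (apply: rgood_int => //).
set X := \int[mu]_x complex.Re (f x); set Y := \int[mu]_x complex.Im (f x).
have -> : ((a +i* b) * (X +i* Y) = (a*X - b*Y) +i* (a*Y + b*X))%C by [].
by rewrite mulNr addrC.
Qed.

Lemma cint_sum (J : Type) (s : seq J) (P : pred J) (F : J -> T -> R[i]) :
  (forall j, P j -> cgood (F j)) ->
  cintegral mu (fun x => \sum_(j <- s | P j) F j x) =
  \sum_(j <- s | P j) cintegral mu (F j).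
Proof.
move=> hF; elim: s => [|a s IH].
  rewrite big_nil (_ : (fun x => \sum_(j <- [::] | P j) F j x) = fun _ => 0) ?cint0 //.
  by apply: funext => x; rewrite big_nil.
case hP: (P a).
  rewrite big_cons hP -IH -cintD //; [|exact: hF|exact: cgood_sum].
  by apply: f_equal; apply: funext => x; rewrite big_cons hP.
rewrite big_cons hP -IH.
have -> : (fun x => \sum_(j <- a :: s | P j) F j x) = (fun x => \sum_(j <- s | P j) F j x).
  by apply: funext => x; rewrite big_cons hP.
by [].
Qed.

End CGood.
Ltac cext H := let h := fresh in have h := H; apply: (cgood_ext h).

Definition mgood {R : realType} {d : measure_display} {T : measurableType d} {m n : nat}
  (F : T -> 'M[R[i]]_(m, n)) := forall a b, cgood (fun t => F t a b).

Lemma mxadjE {R : rcfType} m n (M : 'M[R[i]]_(m, n)) a b : mxadj M a b = (M b a)^*.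
Proof. by rewrite /mxadj !mxE. Qed.

Section MGood.
Context {R : realType} {d : measure_display} {T : measurableType d}.

Lemma mgood_cst m n (M : 'M[R[i]]_(m, n)) : mgood (fun _ : T => M).
Proof. by move=> a b; apply: cgood_cst. Qed.

Lemma mgoodD m n (F G : T -> 'M[R[i]]_(m, n)) :
  mgood F -> mgood G -> mgood (fun t => F t + G t).
Proof. by move=> hF hG a b; cext (cgoodD (hF a b) (hG a b)) => t; rewrite mxE. Qed.

Lemma mgoodM m n p (F : T -> 'M[R[i]]_(m, n)) (G : T -> 'M[R[i]]_(n, p)) :
  mgood F -> mgood G -> mgood (fun t => F t *m G t).
Proof.
move=> hF hG a b.
have h := @cgood_sum _ _ _ _ (index_enum 'I_n) xpredT (fun k t => F t a k * G t k b)
  (fun k _ => cgoodM (hF a k) (hG k b)).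
by apply: (cgood_ext h) => t; rewrite mxE.
Qed.

Lemma mgood_adj m n (F : T -> 'M[R[i]]_(m, n)) : mgood F -> mgood (fun t => mxadj (F t)).
Proof. by move=> hF a b; cext (cgoodC (hF b a)) => t; rewrite mxadjE. Qed.

Lemma mgoodZ m n (k : T -> R[i]) (F : T -> 'M[R[i]]_(m, n)) :
  cgood k -> mgood F -> mgood (fun t => k t *: F t).
Proof. by move=> hk hF a b; cext (cgoodM hk (hF a b)) => t; rewrite mxE. Qed.

Lemma mgood_sum m n (J : Type) (s : seq J) (P : pred J) (F : J -> T -> 'M[R[i]]_(m, n)) :
  (forall j, P j -> mgood (F j)) -> mgood (fun t => \sum_(j <- s | P j) F j t).
Proof.
move=> hF a b.
have h := @cgood_sum _ _ _ _ s P (fun j t => F j t a b) (fun j hj => hF j hj a b).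
by apply: (cgood_ext h) => t; rewrite summxE.
Qed.

Lemma mgood_comp d' (T' : measurableType d') (phi : T' -> T) m n (F : T -> 'M[R[i]]_(m, n)) :
  measurable_fun setT phi -> mgood F -> mgood (F \o phi).
Proof. by move=> mphi hF a b; exact: (cgood_comp mphi (hF a b)). Qed.

Context (mu : {measure set T -> \bar R}) (mufin : (mu setT < +oo)%E).

Lemma mxintD m n (F G : T -> 'M[R[i]]_(m, n)) : mgood F -> mgood G ->
  mxintegral mu (fun t => F t + G t) = mxintegral mu F + mxintegral mu G.
Proof.
move=> hF hG; apply/matrixP => a b; rewrite !mxE -cintD //.
by apply: f_equal; apply: funext => t; rewrite mxE.
Qed.

Lemma mxint_sum m n (J : Type) (s : seq J) (P : pred J) (F : J -> T -> 'M[R[i]]_(m, n)) :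
  (forall j, P j -> mgood (F j)) ->
  mxintegral mu (fun t => \sum_(j <- s | P j) F j t) =
  \sum_(j <- s | P j) mxintegral mu (F j).
Proof.
move=> hF; apply/matrixP => a b; rewrite summxE mxE.
under eq_bigr do rewrite mxE.
rewrite -(@cint_sum _ _ _ mu mufin _ s P (fun j t => F j t a b)); last by move=> j hj; apply: hF.
apply: f_equal; apply: funext => t; rewrite summxE.
by [].
Qed.

Lemma mxintZ m n (k : R[i]) (F : T -> 'M[R[i]]_(m, n)) : mgood F ->
  mxintegral mu (fun t => k *: F t) = k *: mxintegral mu F.
Proof.
move=> hF; apply/matrixP => a b; rewrite !mxE -cintZ //.
by apply: f_equal; apply: funext => t; rewrite mxE.
Qed.

Lemma mxint_mull m n p (A : 'M[R[i]]_(m, n)) (F : T -> 'M[R[i]]_(n, p)) : mgood F ->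
  mxintegral mu (fun t => A *m F t) = A *m mxintegral mu F.
Proof.
move=> hF; apply/matrixP => a b; rewrite !mxE.
have -> : (fun t => (A *m F t) a b) = (fun t => \sum_(k <- index_enum 'I_n | xpredT k) A a k * F t k b).
  by apply: funext => t; rewrite mxE.
rewrite cint_sum //; last by move=> k _; apply: cgoodM; [apply: cgood_cst|apply: hF].
apply: eq_bigr => k _; rewrite cintZ // mxE //.
Qed.

Lemma mxint_mulr m n p (F : T -> 'M[R[i]]_(m, n)) (B : 'M[R[i]]_(n, p)) : mgood F ->
  mxintegral mu (fun t => F t *m B) = mxintegral mu F *m B.
Proof.
move=> hF; apply/matrixP => a b; rewrite !mxE.
have -> : (fun t => (F t *m B) a b) = (fun t => \sum_(k <- index_enum 'I_n | xpredT k) B k b * F t a k).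
  by apply: funext => t; rewrite mxE; apply: eq_bigr => k _; rewrite mulrC.
rewrite cint_sum //; last by move=> k _; apply: cgoodM; [apply: cgood_cst|apply: hF].
apply: eq_bigr => k _; rewrite cintZ // mxE mulrC //.
Qed.

End MGood.
Arguments mgoodD {R d T m n F G}.
Arguments mgoodM {R d T m n p F G}.
Arguments mgood_adj {R d T m n F}.
Arguments mgoodZ {R d T m n k F}.
Arguments mgood_comp {R d T d' T' phi m n F}.
Arguments mgood_cst {R d T m n}.

Section Meas.
Context {R : realType}.

Lemma prob_fin d1 (T1 : measurableType d1) (m1 : probability T1 R) : (m1 setT < +oo)%E.
Proof. by apply: (le_lt_trans (probability_le1 _ _)) => //; rewrite ltry. Qed.

Lemma prod_fin d1 d2 (T1 : measurableType d1) (T2 : measurableType d2)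
  (m1 : probability T1 R) (m2 : probability T2 R) :
  ((m1 \x m2)%E setT < +oo)%E.
Proof.
rewrite -setXTT product_measure1E //.
have h1 : (m1 setT < +oo)%E by apply: (le_lt_trans (probability_le1 _ _)) => //; rewrite ltry.
have h2 : (m2 setT < +oo)%E by apply: (le_lt_trans (probability_le1 _ _)) => //; rewrite ltry.
apply: lte_mul_pinfty => //; rewrite ge0_fin_numE //.
Qed.

Lemma fub_indic d1 d2 (T1 : measurableType d1) (T2 : measurableType d2)
  (m1 : probability T1 R) (m2 : probability T2 R) (S : set (T1 * T2))
  (mS : measurable S) (m : T1 -> R) (hm : rgood m) :
  Rintegral (m1 \x m2)%E setT (fun q => \1_S q * m q.1) =
  Rintegral m1 setT (fun g => m g * fine (m2 (xsection S g))).
Proof.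
have hg : rgood (fun q : T1 * T2 => \1_S q * m q.1).
  apply: rgoodM; first exact: rgood_indic.
  exact: (rgood_comp measurable_fst hm).
rewrite /Rintegral; congr fine.
rewrite -integral12_prod_meas1.
2: by apply: (rgood_int _ _ _ hg); exact: prod_fin.
apply: eq_integral => g _; rewrite /fubini_F.
have -> : (fun y => (\1_S (g, y) * m (g, y).1)%:E) = (fun y => (\1_(xsection S g) y)%:E * (m g)%:E)%E.
  apply: funext => y; rewrite EFinM /=; congr (_ * _)%E.
  by rewrite /indic mem_xsection.
rewrite integralZr //; last first.
  apply: rgood_int; [exact: prob_fin| apply: rgood_indic; exact: measurable_xsection].
rewrite integral_indic //; last exact: measurable_xsection.
rewrite setIT EFinM muleC; congr (_ * _)%E.
rewrite fineK // ge0_fin_numE //.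
by apply: (le_lt_trans (probability_le1 _ _)); [exact: measurable_xsection| rewrite ltry].
Qed.

Lemma inv_int d1 (T1 : measurableType d1) (mu : probability T1 R) (phi : T1 -> T1)
  (mphi : measurable_fun setT phi)
  (hphi : forall A, measurable A -> mu (phi @^-1` A) = mu A) (f : T1 -> R) (hf : rgood f) :
  Rintegral mu setT (fun x => f (phi x)) = Rintegral mu setT f.
Proof.
rewrite /Rintegral; congr fine.
have mf : measurable_fun setT (EFin \o f) by apply/measurable_EFinP; case: hf.
have h := @integral_pushforward _ _ _ _ _ phi mphi mu setT (EFin \o f) mf.
rewrite preimage_setT in h.
rewrite (_ : (\int[mu]_x (f (phi x))%:E)%E = \int[mu]_x ((EFin \o f) \o phi) x)%E //.
rewrite -h //; last by apply: rgood_int; [exact: prob_fin| exact: (rgood_comp mphi hf)].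
apply: (eq_measure_integral mu) => A mA _.
by rewrite /pushforward; apply: hphi.
Qed.

End Meas.

Section Alg.
Context {R : rcfType}.
Local Notation cj := (@conjc R).

Lemma corE (r : R) : complex_of_real r = (r%:C)%C.
Proof. by []. Qed.

Lemma mxadjM m n p (A : 'M[R[i]]_(m, n)) (B : 'M[R[i]]_(n, p)) :
  mxadj (A *m B) = mxadj B *m mxadj A.
Proof.
apply/matrixP => a b; rewrite mxadjE !mxE rmorph_sum.
by apply: eq_bigr => k _; rewrite rmorphM mulrC !mxadjE.
Qed.

Lemma mxadjZ m n (k : R[i]) (A : 'M[R[i]]_(m, n)) : mxadj (k *: A) = cj k *: mxadj A.
Proof. by apply/matrixP => a b; rewrite /mxadj !mxE rmorphM. Qed.

Lemma mxadjK m n (A : 'M[R[i]]_(m, n)) : mxadj (mxadj A) = A.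
Proof. by apply/matrixP => a b; rewrite /mxadj !mxE; case: (A a b) => x y /=; rewrite opprK. Qed.

Lemma conjmapM n (A B tau : 'M[R[i]]_n) : conjmap (A *m B) tau = conjmap A (conjmap B tau).
Proof. by rewrite /conjmap mxadjM !mulmxA. Qed.

Lemma conjmapZ n (k : R[i]) (A tau : 'M[R[i]]_n) :
  conjmap (k *: A) tau = (k * cj k) *: conjmap A tau.
Proof.
by rewrite /conjmap mxadjZ -!scalemxAl -scalemxAr scalerA.
Qed.

Lemma unit_conj (k : R[i]) : `|k| = 1 -> k * cj k = 1.
Proof. by move=> h; rewrite -normCK h expr1n. Qed.

End Alg.

Section Meas2.
Context {R : realType}.

Lemma cgood_sec d1 d2 (T1 : measurableType d1) (T2 : measurableType d2)
  (m2 : probability T2 R) (S : set (T1 * T2)) (mS : measurable S) :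
  cgood (fun g : T1 => complex_of_real (fine (m2 (xsection S g)))).
Proof.
apply: cgood_real; split.
  apply: (measurableT_comp (fine_measurable _)) => //.
  exact: (measurable_fun_xsection m2 mS).
exists 1 => g.
have h0 : (0 <= m2 (xsection S g))%E by [].
have h1 : (m2 (xsection S g) <= 1)%E by apply: probability_le1; exact: measurable_xsection.
have hf : m2 (xsection S g) \is a fin_num.
  by rewrite ge0_fin_numE //; apply: (le_lt_trans h1); rewrite ltry.
rewrite ger0_norm ?fine_ge0 //.
by have := fine_le hf (isT : (1%:E : \bar R) \is a fin_num) h1.
Qed.

Lemma mxint_fub d1 d2 (T1 : measurableType d1) (T2 : measurableType d2)
  (m1 : probability T1 R) (m2 : probability T2 R) (S : set (T1 * T2))
  (mS : measurable S) n (F : T1 -> 'M[R[i]]_n) (hF : mgood F) :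
  mxintegral (m1 \x m2)%E (fun q => complex_of_real (\1_S q) *: F q.1) =
  mxintegral m1 (fun g => complex_of_real (fine (m2 (xsection S g))) *: F g).
Proof.
apply/matrixP => a b; rewrite !mxE /cintegral; congr Complex.
- have -> : (fun t => complex.Re ((complex_of_real (\1_S t) *: F t.1) a b)) =
            (fun q => \1_S q * complex.Re (F q.1 a b)).
    by apply: funext => t; rewrite mxE /=; case: (F t.1 a b) => x y /=; rewrite mul0r subr0.
  rewrite (@fub_indic _ _ _ _ _ m1 m2 S mS _ (hF a b).1); congr Rintegral; apply: funext => g.
  by rewrite mxE mulrC /=; case: (F g a b) => x y /=; rewrite mul0r subr0.
- have -> : (fun t => complex.Im ((complex_of_real (\1_S t) *: F t.1) a b)) =
            (fun q => \1_S q * complex.Im (F q.1 a b)).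
    by apply: funext => t; rewrite mxE /=; case: (F t.1 a b) => x y /=; rewrite mul0r addr0.
  rewrite (@fub_indic _ _ _ _ _ m1 m2 S mS _ (hF a b).2); congr Rintegral; apply: funext => g.
  by rewrite mxE mulrC /=; case: (F g a b) => x y /=; rewrite mul0r addr0.
Qed.

Lemma mxint_inv d1 (T1 : measurableType d1) (mu : probability T1 R) (phi : T1 -> T1)
  (mphi : measurable_fun setT phi)
  (hphi : forall A, measurable A -> mu (phi @^-1` A) = mu A)
  n (F : T1 -> 'M[R[i]]_n) (hF : mgood F) :
  mxintegral mu (fun g => F (phi g)) = mxintegral mu F.
Proof.
apply/matrixP => a b; rewrite !mxE /cintegral; congr Complex.
- exact: (@inv_int _ _ _ mu phi mphi hphi _ (hF a b).1).
- exact: (@inv_int _ _ _ mu phi mphi hphi _ (hF a b).2).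
Qed.

End Meas2.

Section Alg2.
Context {R : rcfType}.

Lemma key_alg n (Ri Rj Rg Ui Uj Uo tau : 'M[R[i]]_n) (ai aj : R[i]) :
  mxadj Ri *m Ri = 1%:M -> Ri *m mxadj Ri = 1%:M ->
  mxadj Rj *m Uj *m Rj = aj *: Uo -> mxadj Ri *m Ui *m Ri = ai *: Uo ->
  `|ai| = 1 -> `|aj| = 1 ->
  conjmap (mxadj (Rj *m (Rg *m mxadj Ri)) *m Uj *m (Rj *m (Rg *m mxadj Ri)) *m mxadj Ui) tau
  = conjmap Ri (conjmap (mxadj Rg *m Uo *m Rg *m mxadj Uo) (conjmap (mxadj Ri) tau)).
Proof.
move=> hR1 hR2 hj hi nai naj.
have hR1' : forall m (Q : 'M[R[i]]_(m, n)), Q *m mxadj Ri *m Ri = Q.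
  by move=> m Q; rewrite -mulmxA hR1 mulmx1.
have hUi : Ui = ai *: (Ri *m Uo *m mxadj Ri).
  transitivity (Ri *m (mxadj Ri *m Ui *m Ri) *m mxadj Ri).
    by rewrite !mulmxA hR2 mul1mx -mulmxA hR2 mulmx1.
  by rewrite hi -scalemxAr -scalemxAl.
have hUa : mxadj Ui = (ai^*)%C *: (Ri *m mxadj Uo *m mxadj Ri).
  by rewrite hUi mxadjZ !mxadjM mxadjK mulmxA.
have -> : mxadj (Rj *m (Rg *m mxadj Ri)) *m Uj *m (Rj *m (Rg *m mxadj Ri)) *m mxadj Ui
   = Ri *m mxadj Rg *m (mxadj Rj *m Uj *m Rj) *m Rg *m mxadj Ri *m mxadj Ui.
  by rewrite !mxadjM mxadjK !mulmxA.
rewrite hj hUa.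
rewrite -?scalemxAr -?scalemxAl -?scalemxAr -?scalemxAl -?scalemxAr -?scalemxAl -?scalemxAr scalerA.
rewrite !mulmxA hR1'.
rewrite conjmapZ unit_conj; last by rewrite normrM naj norm_conjC nai mulr1.
by rewrite scale1r !conjmapM.
Qed.

Lemma re_conj_mul (z : R[i]) : complex.Re ((z^*)%C * z) = complex.Re z ^+ 2 + complex.Im z ^+ 2.
Proof. by case: z => x y /=; rewrite !expr2 mulNr opprK. Qed.

Lemma re_sum (J : Type) (s : seq J) (P : pred J) (F : J -> R[i]) :
  complex.Re (\sum_(j <- s | P j) F j) = \sum_(j <- s | P j) complex.Re (F j).
Proof.
elim: s => [|a s IH]; first by rewrite !big_nil.
rewrite !big_cons; case: (P a) => //.
by rewrite -IH; case: (F a) => ? ?; case: (\sum_(j <- s | P j) F j).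
Qed.

Lemma unitary_bound n (A : 'M[R[i]]_n) : mxadj A *m A = 1%:M ->
  forall a b, complex.Re (A a b) ^+ 2 + complex.Im (A a b) ^+ 2 <= 1.
Proof.
move=> hA a b.
have : complex.Re ((mxadj A *m A) b b) = 1 by rewrite hA mxE eqxx.
rewrite mxE re_sum.
under eq_bigr do rewrite mxadjE re_conj_mul.
move=> <-; rewrite (bigD1 a) //= lerDl.
by apply: sumr_ge0 => k _; apply: addr_ge0; apply: sqr_ge0.
Qed.

End Alg2.

From mathcomp Require Import lra.

Lemma sq_bound {R : realType} (x y : R) : x ^+ 2 + y ^+ 2 <= 1 -> `|x| <= 2.
Proof.
move=> h; have hy : 0 <= y ^+ 2 by apply: sqr_ge0.
case: (lerP 0 x) => hx; [rewrite ger0_norm // | rewrite ltr0_norm //]; rewrite !expr2 in h hy; nra.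
Qed.

Theorem theorem3p12
  (R : realType)
  (* the compact group G, with its Borel structure, group law and Haar measure *)
  (dG : measure_display) (G : measurableType dG)
  (mul : G -> G -> G) (inv : G -> G) (one : G)
  (mulA : forall a b c, mul a (mul b c) = mul (mul a b) c)
  (mul1g : forall a, mul one a = a)
  (mulVg : forall a, mul (inv a) a = one)
  (mul_meas : measurable_fun [set: G * G] (fun p : G * G => mul p.1 p.2))
  (inv_meas : measurable_fun [set: G] inv)
  (muG : probability G R)
  (haar_left : forall g A, measurable A -> muG ((mul g) @^-1` A) = muG A)
  (haar_right : forall g A, measurable A ->
     muG ((fun x => mul x g) @^-1` A) = muG A)
  (haar_inv : forall A, measurable A -> muG (inv @^-1` A) = muG A)
  (* the unitary representation rho : G -> U(V), V = C^d *)
  (d : nat) (rho : G -> 'M[R[i]]_d)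
  (rho_mul : forall g h, rho (mul g h) = rho g *m rho h)
  (rho_one : rho one = 1%:M)
  (rho_unitary : forall g, mxadj (rho g) *m rho g = 1%:M /\
                           rho g *m mxadj (rho g) = 1%:M)
  (rho_meas : forall a b,
     measurable_fun [set: G] (fun g => complex.Re (rho g a b)) /\
     measurable_fun [set: G] (fun g => complex.Im (rho g a b)))
  (* the unitary error basis {U_i}_{i in I} *)
  (I : finType) (cardI : #|I| = (d ^ 2)%N) (U : I -> 'M[R[i]]_d)
  (U_unitary : forall i, mxadj (U i) *m U i = 1%:M /\
                         U i *m mxadj (U i) = 1%:M)
  (U_orth : forall i j,
     complex_of_real (d%:R^-1) * \tr (mxadj (U i) *m U j) = (i == j)%:R)
  (* the finite subgroup H and the H-equivariance of the UEB *)
  (H : set G) (H_fin : finite_set H) (H_one : H one)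
  (H_mul : forall g h, H g -> H h -> H (mul g h))
  (H_inv : forall h, H h -> H (inv h))
  (sigma : I -> G -> I) (alpha : I -> G -> R[i])
  (sigma_one : forall i, sigma i one = i)
  (sigma_mul : forall i h h', H h -> H h' ->
     sigma (sigma i h) h' = sigma i (mul h h'))
  (alpha_unit : forall i h, H h -> `|alpha i h| = 1)
  (equivariant : forall i h, H h ->
     mxadj (rho h) *m U i *m rho h = alpha i h *: U (sigma i h))
  (* the space C with its measure and measure-preserving left G-action *)
  (dC : measure_display) (C : measurableType dC) (muC : probability C R)
  (act : G -> C -> C)
  (act_one : forall x, act one x = x)
  (act_mul : forall g h x, act (mul g h) x = act g (act h x))
  (act_meas : measurable_fun [set: G * C] (fun p : G * C => act p.1 p.2))
  (act_preserving : forall g A, measurable A ->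
     muC ((act g) @^-1` A) = muC A)
  (* the orbit I_k of sigma, with fixed element o (the "0" of the paper) *)
  (Ik : {set I}) (o : I)
  (Ik_orbit : forall i, i \in Ik <-> exists2 h, H h & i = sigma o h)
  (* a tight compatible encoding scheme {D_i}_{i in I_k}; E_i := D_i *)
  (D : I -> set C)
  (D_meas : forall i, i \in Ik -> measurable (D i))
  (D_disj : forall i j, i \in Ik -> j \in Ik -> i != j -> D i `&` D j = set0)
  (D_cover : muC [set x | forall i, i \in Ik -> ~ D i x] = 0%E)
  (D_compat : forall h i, H h -> i \in Ik ->
     (act h) @` (D i) = D (sigma i (inv h)))
  (* the chosen elements c_i in H with c_i . E_0 = E_i *)
  (c : I -> G)
  (c_H : forall i, i \in Ik -> H (c i))
  (c_E : forall i, i \in Ik -> (act (c i)) @` (D o) = D i)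
  (i : I) (i_Ik : i \in Ik) (tau : 'M[R[i]]_d) :
  let E := D in
  let Ux := Ureading Ik D U in
  let p := fun g : G => fine (muC (E o `&` (act g) @^-1` (D o))) in
  (* T^k_i (tau) *)
  complex_of_real (fine (muC (E i)))^-1 *:
    mxintegral (muG \x muC)%E (fun q : G * C =>
      complex_of_real (\1_(E i) q.2) *:
        conjmap (mxadj (rho q.1) *m Ux (act q.1 q.2) *m rho q.1 *m mxadj (U i))
                tau)
  =
  complex_of_real (#|Ik|%:R / fine (muC (E o))) *:
    conjmap (rho (c i))
      (mxintegral muG (fun g : G =>
         complex_of_real (p g) *:
           conjmap (mxadj (rho g) *m U o *m rho g *m mxadj (U o))
                   (conjmap (mxadj (rho (c i))) tau))).
Proof.
move=> E Ux p.
have mulgV : forall g, mul g (inv g) = one.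
  move=> g; have h := mulVg (inv g).
  by rewrite -[LHS]mul1g -{1}h -mulA (mulA (inv g) g) mulVg mul1g h.
have mulg1 : forall g, mul g one = g by move=> g; rewrite -(mulVg g) mulA mulgV mul1g.
have invK : forall g, inv (inv g) = g.
  by move=> g; rewrite -[LHS]mulg1 -(mulVg g) mulA mulVg mul1g.
have actK : forall g x, act (inv g) (act g x) = x by move=> g x; rewrite -act_mul mulVg act_one.
have actKV : forall g x, act g (act (inv g) x) = x by move=> g x; rewrite -act_mul mulgV act_one.
have rho_inv : forall g, rho (inv g) = mxadj (rho g).
  move=> g; have h : rho (inv g) *m rho g = 1%:M by rewrite -rho_mul mulVg rho_one.
  by rewrite -[LHS]mulmx1 -(rho_unitary g).2 mulmxA h mul1mx.
have mact : forall g, measurable_fun setT (act g).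
  by move=> g; exact: (measurableT_comp act_meas (pair1_measurable g)).
have mmull : forall a, measurable_fun setT (mul a).
  by move=> a; exact: (measurableT_comp mul_meas (pair1_measurable a)).
have mmulr : forall b, measurable_fun setT (fun x => mul x b).
  by move=> b; exact: (measurableT_comp mul_meas (pair2_measurable b)).
have mpre : forall g A, measurable A -> measurable (act g @^-1` A).
  by move=> g A mA; rewrite -[_ @^-1` _]setTI; apply: mact.
have memD : forall j, j \in Ik -> forall y, D j y <-> D o (act (inv (c j)) y).
  move=> j hj y; rewrite -(c_E j hj); split.
  - by case=> z hz <-; rewrite actK.
  - by move=> h; exists (act (inv (c j)) y) => //; rewrite actKV.
have o_Ik : o \in Ik by apply/Ik_orbit; exists one => //; rewrite sigma_one.
have Do_ne : exists x, D o x.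
  case: (pselect (exists x, D o x)) => // hno; exfalso.
  have hT : [set x | forall i, i \in Ik -> ~ D i x] = setT.
    apply/seteqP; split=> x // _ j hj /(memD j hj) h; apply: hno; by exists (act (inv (c j)) x).
  move: D_cover; rewrite hT probability_setT => /eqP.
  by rewrite eqe oner_eq0.
have Dinj : forall j, j \in Ik -> D j = D o -> j = o.
  move=> j hj hD; apply/eqP; apply: contraT => hne.
  have := D_disj j o hj o_Ik hne; rewrite hD setIid => h0.
  by case: Do_ne => x; rewrite h0.
have sig_cj : forall j, j \in Ik -> sigma j (c j) = o.
  move=> j hj; have hs : sigma j (c j) \in Ik.
    case/Ik_orbit: (hj) => h hH hjeq; apply/Ik_orbit; exists (mul h (c j)).
      exact: H_mul _ _ hH (c_H j hj).
    by rewrite {1}hjeq sigma_mul //; exact: c_H.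
  apply: Dinj hs _.
  have := D_compat (inv (c j)) j (H_inv _ (c_H j hj)) hj; rewrite invK => <-.
  apply/seteqP; split => y.
  - by case=> z hz <-; apply/(memD j hj).
  - move=> hy; exists (act (c j) y); last by rewrite actK.
    by apply/(memD j hj); rewrite actK.
have Ueq : forall j, j \in Ik -> mxadj (rho (c j)) *m U j *m rho (c j) = alpha j (c j) *: U o.
  by move=> j hj; rewrite equivariant ?sig_cj //; exact: c_H.
have muDi : muC (D i) = muC (D o).
  have -> : D i = act (inv (c i)) @^-1` D o.
    by apply/seteqP; split => x hx; apply/(memD i i_Ik).
  by rewrite act_preserving //; apply: D_meas.
pose S j := [set q : G * C | D i q.2 /\ D j (act q.1 q.2)].
have mS : forall j, j \in Ik -> measurable (S j).
  move=> j hj.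
  have -> : S j = (setT `&` snd @^-1` D i) `&` (setT `&` (fun q : G * C => act q.1 q.2) @^-1` D j).
    by apply/seteqP; split => q /=; [case=> h1 h2 | case=> [[_ h1] [_ h2]]].
  apply: measurableI.
    by apply: measurable_snd => //; apply: D_meas.
  by apply: act_meas => //; apply: D_meas.
have grho : mgood rho.
  move=> a b; have hb := fun g => unitary_bound _ _ (rho_unitary g).1 a b.
  split; split; [exact: (rho_meas a b).1 | | exact: (rho_meas a b).2 |]; exists 2 => g.
  - exact: sq_bound (hb g).
  - by apply: sq_bound; rewrite addrC; exact: hb g.
have gconj : forall (t0 : 'M[R[i]]_d) (F : G -> 'M[R[i]]_d), mgood F -> mgood (fun g => conjmap (F g) t0).
  move=> t0 F hF; rewrite /conjmap; apply: mgoodM; first exact: mgoodM hF (mgood_cst _).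
  exact: mgood_adj.
pose M j g := conjmap (mxadj (rho g) *m U j *m rho g *m mxadj (U i)) tau.
have gM : forall j, mgood (M j).
  move=> j; apply: gconj; apply: (mgoodM _ (mgood_cst _)).
  apply: (mgoodM _ grho); apply: (mgoodM _ (mgood_cst _)); exact: mgood_adj.
pose N g := conjmap (rho (c i)) (conjmap (mxadj (rho g) *m U o *m rho g *m mxadj (U o))
                   (conjmap (mxadj (rho (c i))) tau)).
have ind1 : forall (T : Type) (A : set T) z, A z -> \1_A z = 1 :> R.
  by move=> T A z h; rewrite indicE mem_set.
have ind0 : forall (T : Type) (A : set T) z, ~ A z -> \1_A z = 0 :> R.
  by move=> T A z h; rewrite indicE memNset.
have cor0 : complex_of_real (0 : R) = 0 by [].
have cor1 : complex_of_real (1 : R) = 1 by [].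
have step1 : (fun q : G * C => complex_of_real (\1_(E i) q.2) *:
        conjmap (mxadj (rho q.1) *m Ux (act q.1 q.2) *m rho q.1 *m mxadj (U i)) tau) =
    (fun q => \sum_(j in Ik) complex_of_real (\1_(S j) q) *: M j q.1).
  apply: funext => -[g x] /=; rewrite /E /Ux /Ureading.
  case: (pselect (exists2 j0, j0 \in Ik & D j0 (act g x))) => [[j0 hj0 hy]|hno].
  - have hoth : forall j, j \in Ik -> j != j0 -> ~ D j (act g x).
      move=> j hj hne hD; have h0 := D_disj j j0 hj hj0 hne.
      have : (D j `&` D j0) (act g x) by split.
      by rewrite h0.
    rewrite (bigD1 j0) //= big1 ?addr0; last first.
      by move=> j /andP [hj hne]; rewrite ind0 ?cor0 ?scale0r //; apply: hoth.
    rewrite (ind1 _ (D j0) (act g x) hy) cor1 scale1r.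
    rewrite (bigD1 j0) //= big1 ?addr0; last first.
      move=> j /andP [hj hne]; rewrite ind0 ?cor0 ?scale0r //.
      by case=> _ /= h; apply: (hoth j hj hne).
    case: (pselect (D i x)) => hx.
    + by rewrite !ind1.
    + by rewrite !ind0 ?cor0 ?scale0r // => -[].
  - rewrite big1; last first.
      move=> j hj; rewrite ind0 ?cor0 ?scale0r // => h; apply: hno; by exists j.
    rewrite big1; last first.
      move=> j hj; rewrite ind0 ?cor0 ?scale0r // => -[_ /= h]; apply: hno; by exists j.
    by rewrite mulmx0 !mul0mx /conjmap !mul0mx scaler0.
have step4 : forall j, j \in Ik ->
    mxintegral muG (fun g => complex_of_real (fine (muC (xsection (S j) g))) *: M j g) =
    mxintegral muG (fun g => complex_of_real (p g) *: N g).
  move=> j hj.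
  pose phi g := mul (c j) (mul g (inv (c i))).
  have mphi : measurable_fun setT phi.
    exact: (measurableT_comp (mmull (c j)) (mmulr (inv (c i)))).
  have hphi : forall A, measurable A -> muG (phi @^-1` A) = muG A.
    move=> A mA.
    have mA' : measurable (mul (c j) @^-1` A) by rewrite -[_ @^-1` _]setTI; apply: mmull.
    have -> : phi @^-1` A = (fun x => mul x (inv (c i))) @^-1` (mul (c j) @^-1` A) by [].
    by rewrite haar_right // haar_left.
  have gF : mgood (fun g => complex_of_real (fine (muC (xsection (S j) g))) *: M j g).
    exact: (mgoodZ (@cgood_sec R _ _ G C muC (S j) (mS j hj)) (gM j)).
  rewrite -(@mxint_inv _ _ _ muG phi mphi hphi _ _ gF).
  congr mxintegral; apply: funext => g /=; congr (_ *: _).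
  - congr complex_of_real; rewrite /p /E; congr fine.
    have -> : xsection (S j) (phi g) = act (inv (c i)) @^-1` (D o `&` act g @^-1` D o).
      apply/seteqP; split => x; rewrite /xsection /S /= in_setE /= /phi !act_mul.
      + case=> h1 h2; split; first by apply/(memD i i_Ik).
        by move/(memD j hj): h2; rewrite actK.
      + case=> h1 h2; split; first by apply/(memD i i_Ik).
        by apply/(memD j hj); rewrite actK.
    rewrite act_preserving //; apply: measurableI; first exact: D_meas.
    by apply: mpre; apply: D_meas.
  - rewrite /M /N /phi !rho_mul rho_inv.
    apply: key_alg; [exact: (rho_unitary _).1 | exact: (rho_unitary _).2 | exact: Ueq | exact: Ueq
      | apply: alpha_unit; exact: c_H | apply: alpha_unit; exact: c_H].
pose S0 := [set q : G * C | D o q.2 /\ D o (act q.1 q.2)].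
have mS0 : measurable S0.
  have -> : S0 = (setT `&` snd @^-1` D o) `&` (setT `&` (fun q : G * C => act q.1 q.2) @^-1` D o).
    by apply/seteqP; split => q /=; [case=> h1 h2 | case=> [[_ h1] [_ h2]]].
  apply: measurableI.
    by apply: measurable_snd => //; apply: D_meas.
  by apply: act_meas => //; apply: D_meas.
have gp : cgood (fun g => complex_of_real (p g)).
  apply: (cgood_ext (@cgood_sec R _ _ G C muC S0 mS0)) => g.
  rewrite /p /E; congr (complex_of_real (fine (muC _))).
  by apply/seteqP; split => y; rewrite /xsection /= in_setE.
rewrite step1.
rewrite mxint_sum; last first.
  - move=> j hj; apply: mgoodZ; first by apply: cgood_real; apply: rgood_indic; exact: mS.
    exact: (mgood_comp measurable_fst (gM j)).
  - exact: prod_fin.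
under eq_bigr => j hj do rewrite (@mxint_fub _ _ _ _ _ muG muC _ (mS j hj) _ _ (gM j)) (step4 j hj).
rewrite sumr_const.
have gY : mgood (fun g => complex_of_real (p g) *:
           conjmap (mxadj (rho g) *m U o *m rho g *m mxadj (U o))
                   (conjmap (mxadj (rho (c i))) tau)).
  refine (mgoodZ gp _); apply: gconj.
  apply: (mgoodM _ (mgood_cst _)); apply: (mgoodM _ grho); apply: (mgoodM _ (mgood_cst _)).
  exact: mgood_adj.
have -> : conjmap (rho (c i)) (mxintegral muG (fun g => complex_of_real (p g) *:
           conjmap (mxadj (rho g) *m U o *m rho g *m mxadj (U o))
                   (conjmap (mxadj (rho (c i))) tau))) =
    mxintegral muG (fun g => complex_of_real (p g) *: N g).
  rewrite /conjmap -mxint_mull //; last exact: prob_fin.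
  rewrite -mxint_mulr //; try (exact: prob_fin); try (exact: (mgoodM (mgood_cst _) gY)).
  apply: f_equal; apply: funext => g.
  by rewrite /N /conjmap -scalemxAr -scalemxAl.
rewrite /E muDi -scaler_nat scalerA.
have -> : complex_of_real (fine (muC (D o)))^-1 * #|Ik|%:R =
  complex_of_real (#|Ik|%:R / fine (muC (D o))).
  by rewrite !corE rmorphM rmorph_nat mulrC.
by [].
Qed.
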